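(* If $R \subseteq \mathbb{R}$ contains an infinite strictly increasing sequence, then there exists a function $f : \mathbb{N}^{\mathbb{N}} \to R$ such that Player I has a winning strategy in $\Gamma(f)$, and for each $r \in \mathbb{R}$ and each Cantor set $C \subseteq \mathbb{N}^{\mathbb{N}}$ the set $C \cap \{f \ge r\}$ is either uncountable or empty.
   Context: Here $X = \mathbb{N}^{\mathbb{N}}$ (the branches of the full tree of finite sequences of natural numbers) with the product topology. A Cantor set is a subset homeomorphic to the middle-thirds Cantor set. $\{f \ge r\} = \{x : f(x) \ge r\}$. The game $\Gamma(f)$: Player I and Player II alternate, Player I moving first; Player I plays natural numbers $x_0, x_1, \dots$, and after each move $x_t$ Player II plays a real number $v_t$. Player II wins the run iff $f(x_0,x_1,\dots) = \limsup_{t\to\infty} v_t$; otherwise Player I wins. *)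

(* Defs.v *)
From HB Require Import structures.
From mathcomp Require Import all_boot all_order all_algebra.
From mathcomp Require Import all_classical all_reals all_analysis.
Set Implicit Arguments. Unset Strict Implicit. Unset Printing Implicit Defensive.
Import Order.TTheory GRing.Theory Num.Theory.
Import numFieldTopology.Exports numFieldNormedType.Exports.
Local Open Scope classical_set_scope.
Local Open Scope ring_scope.

(* Baire space N^N with the product topology (nat carries the discrete topology). *)
Definition baire : Type := prod_topology (fun _ : nat => nat).
HB.instance Definition _ := Pointed.on baire.
HB.instance Definition _ := Nbhs.on baire.
HB.instance Definition _ := Topological.on baire.

Definition middle_thirds (R : realType) : set R :=
  [set y : R | exists a : nat -> bool,
     series (fun n : nat => (2 * (a n)%:R : R) / 3 ^+ n.+1) @ \oo --> y].
Arguments middle_thirds R : clear implicits.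

Definition homeomorphic_sets (T U : topologicalType) (A : set T) (B : set U) :=
  exists (h : T -> U) (g : U -> T),
    [/\ h @` A `<=` B, g @` B `<=` A,
        {in A, cancel h g} & {in B, cancel g h}] /\
    {within A, continuous h} /\ {within B, continuous g}.

Definition cantor_set (R : realType) (C : set baire) :=
  homeomorphic_sets C (middle_thirds R).
Arguments cantor_set R C : clear implicits.

(* The game Gamma(f): player I's strategy maps II's previous moves
   v_0..v_{t-1} to x_t; II wins iff f x = limsup v_t (in the extended reals). *)
Definition playI (R : realType) (sigma : seq R -> nat) (v : nat -> R) : baire :=
  fun t => sigma [seq v i | i <- iota 0 t].

Definition I_has_winning_strategy (R : realType) (f : baire -> R) :=
  exists sigma : seq R -> nat, forall v : nat -> R,
    ((f (playI sigma v))%:E != limn_esup (fun t => (v t)%:E))%E.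

(* Main.v *)
Require Import Defs.
From HB Require Import structures.
From mathcomp Require Import all_boot all_order all_algebra.
From mathcomp Require Import all_classical all_reals all_analysis.
Import Order.TTheory GRing.Theory Num.Theory.
Import numFieldTopology.Exports numFieldNormedType.Exports.
Local Open Scope classical_set_scope.
Local Open Scope ring_scope.
From mathcomp Require Import wochoice zify ring lra.

Module SelPart.
Import Order.TTheory GRing.Theory Num.Theory.
Import numFieldTopology.Exports numFieldNormedType.Exports.
Local Open Scope classical_set_scope.

Section WO.
Variable Y : eqType.
Variable W : rel Y.
Hypothesis HW : well_order W.

Lemma wo_min (P : Y -> Prop) : (exists y, P y) ->
  exists z, P z /\ forall y, P y -> W z y.
Proof.
move=> [y Py].
case: (HW [pred t | `[< P t >]]) => [|z [[zin zlb] _]].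
  by rewrite /nonempty; exists y; rewrite inE.
exists z; split; first by move: zin; rewrite inE.
by move=> t Pt; apply: zlb; rewrite inE.
Qed.

Lemma wo_refl y : W y y.
Proof. by have [z [-> h]] := @wo_min (fun t => t = y) (ex_intro _ y erefl); apply: h. Qed.

Lemma wo_total x y : W x y \/ W y x.
Proof.
have [z [Pz h]] := @wo_min (fun t => t = x \/ t = y) (ex_intro _ x (or_introl erefl)).
case: Pz => <-; [left|right]; apply: h; tauto.
Qed.

Lemma wo_anti x y : W x y -> W y x -> x = y.
Proof.
move=> xy yx.
case: (HW [pred t | (t == x) || (t == y)]) => [|z [[zin zlb] zu]].
  by rewrite /nonempty; exists x; rewrite inE eqxx.
have ex : z = x.
  apply: zu; split; first by rewrite inE eqxx.
  by move=> t; rewrite inE => /orP[] /eqP ->; [exact: wo_refl|].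
have ey : z = y.
  apply: zu; split; first by rewrite inE eqxx orbT.
  by move=> t; rewrite inE => /orP[] /eqP ->; [|exact: wo_refl].
by rewrite -ex -ey.
Qed.

Definition wlt x y := W x y /\ x <> y.

Lemma wlt_wf : well_founded wlt.
Proof.
move=> j; apply: contrapT => nacc.
have [z [nz zmin]] := @wo_min (fun t => ~ Acc wlt t) (ex_intro _ j nacc).
apply: nz; constructor => y [yz neq].
apply: contrapT => ny; apply: neq; apply: wo_anti => //; exact: zmin.
Qed.

End WO.

Section Selection.
Variables (X : pointedType) (K : Type).
Variable target : K -> set X.
Hypothesis bigT : forall k, exists e : (nat -> bool) -> X, injective e /\ forall b, target k (e b).
Hypothesis smallK : exists jK : K -> (nat -> bool), injective jK.

Definition Yt := (nat -> bool).

Lemma selection : exists sel : K -> X, injective sel /\ forall k, target k (sel k).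
Proof.
have [W HW] := well_ordering_principle Yt.
pose lt := @wlt Yt W.
have wf : well_founded lt := @wlt_wf Yt W HW.
pose D j := exists e : Yt -> Yt, injective e /\ forall b, lt (e b) j.
have [jK injK] := smallK.
have [io [iinj igood]] : exists io : K -> Yt, injective io /\ forall k, ~ D (io k).
  case: (pselect (exists j, D j)) => [Dne | Dno].
  - have [j0 [[e0 [e0inj e0lt]] j0min]] := @wo_min Yt W HW _ Dne.
    exists (e0 \o jK); split; first by move=> a b /= /e0inj /injK.
    move=> k /j0min W0; have [W1 neq] := e0lt (jK k).
    by apply: neq; apply: @wo_anti Yt W HW _ _ W1 W0.
  - by exists jK; split => // k Dk; apply: Dno; exists (jK k).
pose F := fun (j : Yt) (rec : forall i, lt i j -> X) =>
  xget point [set x | (exists k, io k = j /\ target k x) /\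
                      ~ (exists i (h : lt i j), rec i h = x)].
pose pt := Fix wf (fun _ => X) F.
have ptE : forall j, pt j = xget point [set x | (exists k, io k = j /\ target k x) /\
                      ~ (exists i, lt i j /\ pt i = x)].
  have Fext : forall (j' : Yt) (f g : forall i, lt i j' -> X),
      (forall i (p : lt i j'), f i p = g i p) -> F j' f = F j' g.
    move=> j' f g hfg; rewrite /F; congr (xget _ _); apply/funext => x /=; apply/propext.
    split => -[H1 H2]; split => //; apply: contra_not H2 => -[i [h <-]]; exists i, h.
      by rewrite hfg.
    by rewrite hfg.
  move=> j; rewrite /pt (Fix_eq wf (fun _ => X) F Fext).
  rewrite /F; congr (xget _ _); apply/funext => x /=; apply/propext.
  split => -[H1 H2]; split => //; apply: contra_not H2.
    by move=> [i [h <-]]; exists i, h.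
  by move=> [i [h <-]]; exists i.
have ptP : forall k, target k (pt (io k)) /\ ~ (exists i, lt i (io k) /\ pt i = pt (io k)).
  move=> k; rewrite {1 2}ptE.
  set S := (X in xget _ X).
  have : S (xget point S).
    apply: xgetPex; apply: contrapT => nS.
    have [e [einj eT]] := bigT k.
    have cov : forall b, exists i, lt i (io k) /\ pt i = e b.
      move=> b; apply: contrapT => nb; apply: nS; exists (e b); split => //.
      by exists k.
    apply: (igood k).
    exists (fun b => xget (io k) [set i | lt i (io k) /\ pt i = e b]); split.
      move=> b1 b2 /= h; apply: einj.
      have [_ h1] := xgetPex (io k) (cov b1).
      have [_ h2] := xgetPex (io k) (cov b2).
      by rewrite -h1 -h2 h.
    by move=> b /=; have [h1 _] := xgetPex (io k) (cov b).
  move=> [[k' [ek' Tk']] nP]; split => //.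
  by rewrite -(iinj _ _ ek').
exists (pt \o io); split; last by move=> k; exact: (ptP k).1.
move=> k1 k2 /= e12; apply: iinj; apply: contrapT => neq.
have [W12|W21] := @wo_total Yt W HW (io k1) (io k2).
  by apply: (ptP k2).2; exists (io k1); split => //; split.
by apply: (ptP k1).2; exists (io k2); split; [split => //; exact: nesym | by []].
Qed.
End Selection.

End SelPart.
Import SelPart.

Module GamePart.
Import Order.TTheory GRing.Theory Num.Theory.
Import numFieldTopology.Exports numFieldNormedType.Exports.
Local Open Scope classical_set_scope.
Local Open Scope ring_scope.
Set Implicit Arguments. Unset Strict Implicit.

Section Game.
Variable R : realType.
Variable a : nat -> R.
Hypothesis ainc : forall n, a n < a n.+1.

Lemma a_lt m n : (m < n)%N -> a m < a n.
Proof. by apply: (@homo_ltn _ a (fun x y => x < y)) => // y x z; exact: lt_trans. Qed.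

Lemma a_le m n : (m <= n)%N -> a m <= a n.
Proof. by rewrite leq_eqVlt => /orP[/eqP->//|/a_lt/ltW]. Qed.

Definition strat (s : seq R) : nat :=
  count (fun k => a k <= nth 0 s (size s).-1) (iota 0 (size s)).

Definition forb (x : nat -> nat) (j : nat) :=
  (exists N, forall t, (N <= t)%N -> (x t <= j.+1)%N) /\
  (forall N, exists t, (N <= t)%N /\ (j <= x t)%N).

Lemma forb_close x j j' : forb x j -> forb x j' -> (j' <= j.+1)%N.
Proof.
move=> [[N HN] _] [_ H']; have [t [Nt jt]] := H' N.
by apply: leq_trans jt (HN _ Nt).
Qed.

Definition kch (x : nat -> nat) (p : nat) : nat :=
  if `[< forb x (3 * p) >] then
    (if `[< forb x (3 * p).+1 >] then (3 * p).+2 else (3 * p).+1)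
  else 3 * p.

Lemma kch_ok x p : ~ forb x (kch x p).
Proof.
rewrite /kch; case: ifP => [/asboolP f0|/asboolP //]; case: ifP => [/asboolP f1 f2|/asboolP //].
by have := forb_close f0 f2; rewrite ltnn.
Qed.

Lemma kch_ge x p : (3 * p <= kch x p)%N.
Proof. rewrite /kch; case: ifP => _; [case: ifP => _|]; lia. Qed.

Lemma kch_le x p : (kch x p <= (3 * p).+2)%N.
Proof. rewrite /kch; case: ifP => _; [case: ifP => _|]; lia. Qed.

Lemma playS (v : nat -> R) t :
  playI strat v t.+1 = count (fun k => a k <= v t) (iota 0 t.+1).
Proof.
rewrite /playI /strat size_map size_iota.
have -> : nth 0 [seq v i | i <- iota 0 t.+1] t.+1.-1 = v t.
  by rewrite (nth_map 0%N) ?size_iota // nth_iota.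
by [].
Qed.

Lemma limsup_fin (v : nat -> R) : limn_esup (fun t => (v t)%:E) =
  ereal_inf (range (esups (fun t => (v t)%:E))).
Proof. by rewrite limn_esup_lim; apply/cvg_lim => //; exact: cvg_esups_inf. Qed.

Lemma game_forb (v : nat -> R) j :
  limn_esup (fun t => (v t)%:E) = (a j)%:E -> forb (playI strat v) j.
Proof.
rewrite limsup_fin => L; split.
  have : (ereal_inf (range (esups (fun t => (v t)%:E))) < (a j.+1)%:E)%E.
    by rewrite L lte_fin.
  move=> /ereal_inf_lt[_ [N _ <-]] HN.
  exists N.+1 => -[//|t] Nt; rewrite playS.
  have vt : v t < a j.+1.
    rewrite -lte_fin; apply: le_lt_trans HN.
    by apply: ereal_sup_ubound; exists t.
  rewrite -size_filter.
  have -> : (j.+1 = size (iota 0 j.+1))%N by rewrite size_iota.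
  apply: uniq_leq_size; first by rewrite filter_uniq // iota_uniq.
  move=> k; rewrite mem_filter mem_iota add0n => /andP[ak _].
  rewrite mem_iota add0n leq0n /= ltnNge; apply/negP => /a_le jk.
  by have := lt_le_trans vt (le_trans jk ak); rewrite ltxx.
move=> N; case: j L => [|j] L.
  by exists N; split.
have : ((a j)%:E < ereal_inf (range (esups (fun t => (v t)%:E))))%E.
  by rewrite L lte_fin.
move=> /lt_le_trans h.
have := h _ (ereal_inf_lbound (ex_intro2 _ _ (maxn N j) I erefl)).
move=> /ereal_sup_gt[_ [t /= Nt <-]].
rewrite lte_fin => at_.
exists t.+1; split; first by apply: leq_trans (leq_maxl N j) _; apply: leq_trans Nt _.
rewrite playS -size_filter.
have -> : (j.+1 = size (iota 0 j.+1))%N by rewrite size_iota.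
apply: uniq_leq_size; first by rewrite iota_uniq.
move=> k; rewrite mem_iota add0n => /andP[_ kj].
rewrite mem_filter mem_iota add0n leq0n (leq_trans kj) ?andbT.
  by apply: ltW; apply: le_lt_trans at_; apply: a_le.
by apply: leq_trans (leq_maxr N j) _; apply: leq_trans Nt _.
Qed.

End Game.

End GamePart.
Import GamePart.

Module MidPart.
Import Order.TTheory GRing.Theory Num.Theory.
Import numFieldTopology.Exports numFieldNormedType.Exports.
Local Open Scope classical_set_scope.
Local Open Scope ring_scope.
Set Implicit Arguments. Unset Strict Implicit.

Section Mid.
Variable R : realType.

Definition term (b : nat -> bool) : R ^nat := fun n : nat => (2 * (b n)%:R : R) / 3 ^+ n.+1.
Definition ps (b : nat -> bool) := series (term b).

Lemma term_ge0 b n : 0 <= term b n.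
Proof. by rewrite /term; apply: divr_ge0; [apply: mulr_ge0|apply: exprn_ge0]. Qed.

Lemma ps_tail b N m : ps b (N + m)%N + (3 ^+ (N + m)%N)^-1 <= ps b N + (3 ^+ N)^-1.
Proof.
elim: m => [|m IH]; first by rewrite addn0.
rewrite addnS /ps seriesSr; apply: le_trans IH; rewrite -/(ps b _).
set n := (N + m)%N.
rewrite -addrA lerD2l /term exprS invfM.
have q0 : 0 < (3 ^+ n)^-1 :> R by rewrite invr_gt0 exprn_gt0.
set iq := (3 ^+ n)^-1 in q0 *.
case: (b n) => /=; lra.
Qed.

Lemma ps_nd b : {homo ps b : i j / (i <= j)%N >-> i <= j}.
Proof.
apply: homo_leq => //; first by move=> ? ? ?; exact: le_trans.
by move=> i; rewrite /ps seriesSr lerDl term_ge0.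
Qed.

Lemma ps_le1 b n : ps b n <= 1.
Proof.
have s0 : ps b 0 = 0 by rewrite /ps seriesEnat /= big_geq.
have := ps_tail b 0 n; rewrite add0n s0 add0r expr0 invr1.
by apply: le_trans; rewrite lerDl invr_ge0 exprn_ge0.
Qed.

Lemma ps_cvg b : cvgn (ps b).
Proof.
apply: nondecreasing_is_cvgn; first exact: ps_nd.
by exists 1 => _ [n _ <-]; exact: ps_le1.
Qed.

Definition sumB b := limn (ps b).

Lemma ps_to b : ps b @ \oo --> sumB b.
Proof. exact: ps_cvg. Qed.

Lemma sumB_M b : middle_thirds R (sumB b).
Proof. by exists b; exact: ps_to. Qed.

Lemma sumB_ge b n : ps b n <= sumB b.
Proof. by rewrite /sumB; apply: nondecreasing_cvgn_le; [exact: ps_nd|exact: ps_cvg]. Qed.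

Lemma sumB_le b N : sumB b <= ps b N + (3 ^+ N)^-1.
Proof.
apply: limr_le; first exact: ps_cvg.
near=> n; have Nn : (N <= n)%N by near: n; exists N.
have := ps_tail b N (n - N); rewrite subnKC //.
by apply: le_trans; rewrite lerDl invr_ge0 exprn_ge0.
Unshelve. all: by end_near. Qed.

Lemma ps_eq b1 b2 n : (forall k, (k < n)%N -> b1 k = b2 k) -> ps b1 n = ps b2 n.
Proof.
move=> H; rewrite /ps !seriesEnat /=; apply: eq_big_nat => k /andP[_ kn].
by rewrite /term H.
Qed.

Lemma sumB_lt b1 b2 n : ps b1 n = ps b2 n -> b1 n -> ~~ b2 n -> sumB b2 < sumB b1.
Proof.
move=> e h1 h2.
have q0 : 0 < (3 ^+ n.+1)^-1 :> R by rewrite invr_gt0 exprn_gt0.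
apply: (le_lt_trans (sumB_le b2 n.+1)); apply: (lt_le_trans _ (sumB_ge b1 n.+1)).
rewrite /ps !seriesSr -/(ps b1 n) -/(ps b2 n) e /term h1 (negbTE h2) /=.
rewrite mulr0 mul0r addr0 mulr1 ltrD2l.
move: q0; set iq := 3 ^- n.+1; lra.
Qed.

Lemma sumB_inj : injective sumB.
Proof.
move=> b1 b2 e; apply/funext => n; elim/ltn_ind: n => n IH.
have psn : ps b1 n = ps b2 n by apply: ps_eq.
case h1: (b1 n); case h2: (b2 n) => //.
  by have := sumB_lt psn h1 (negbT h2); rewrite e ltxx.
by have := sumB_lt (esym psn) h2 (negbT h1); rewrite e ltxx.
Qed.

Lemma ps_const b N m : ps (fun i => (i < N)%N && b i) (N + m)%N = ps b N.
Proof.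
elim: m => [|m IH].
  by rewrite addn0; apply: ps_eq => k ->.
rewrite addnS /ps seriesSr -/(ps _ _) IH /term ltnNge leq_addr /=.
by rewrite mulr0 mul0r addr0.
Qed.

Lemma ps_M b N : middle_thirds R (ps b N).
Proof.
exists (fun i => (i < N)%N && b i); apply: cvg_near_cst.
near=> n; have Nn : (N <= n)%N by near: n; exists N.
by have := ps_const b N (n - N); rewrite subnKC.
Unshelve. all: by end_near. Qed.

Definition tofun (l : seq bool) : nat -> bool := fun i => nth false l i.
Definition dsum (l : seq bool) := ps (tofun l) (size l).

Lemma ps_mkseq b N : ps b N = dsum (mkseq b N).
Proof.
rewrite /dsum size_mkseq; apply: ps_eq => k kN.
by rewrite /tofun nth_mkseq.
Qed.

Lemma dsum_M l : middle_thirds R (dsum l).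
Proof. exact: ps_M. Qed.

End Mid.

End MidPart.
Import MidPart.

Module CantPart.
Import Order.TTheory GRing.Theory Num.Theory.
Import numFieldTopology.Exports numFieldNormedType.Exports.
Local Open Scope classical_set_scope.
Local Open Scope ring_scope.
Set Implicit Arguments. Unset Strict Implicit.

Lemma baire_hausdorff : hausdorff_space baire.
Proof. exact: (hausdorff_product (fun _ => @discrete_hausdorff nat)). Qed.

Lemma within_seq (T U : topologicalType) (A : set T) (g : T -> U) (s : nat -> T) y :
  {within A, continuous g} -> A y -> (forall n, A (s n)) -> s @ \oo --> y ->
  (g \o s) @ \oo --> g y.
Proof.
move=> gc Ay As sy.
have := (subspace_continuousP A g).1 gc y Ay.
move=> gy; apply: (cvg_trans _ gy).
move=> W /= HW; have := sy _ HW.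
by move=> [N _ HN]; exists N => // n Nn; apply: HN => //; exact: As.
Qed.

Section Cant.
Variable R : realType.
Local Notation M := (middle_thirds R).

Definition HG (C : set baire) (h : baire -> R) (g : R -> baire) :=
  [/\ h @` C `<=` M, g @` M `<=` C,
      {in C, cancel h g} & {in M, cancel g h}] /\
    {within C, continuous h} /\ {within M, continuous g}.

Definition gfun (C : set baire) : R -> baire :=
  xget (fun _ => point) [set g | exists h, HG C h g].

Lemma gfunP C : cantor_set R C -> exists h, HG C h (gfun C).
Proof.
move=> [h [g H]]; rewrite /gfun.
by apply: (xgetPex (fun _ => point) (P := [set g | exists h, HG C h g])); exists g, h.
Qed.

Lemma HG_img C h g : HG C h g -> C = g @` M.
Proof.
move=> [[hC gM hg gh] _]; apply/seteqP; split => [x Cx|]; last exact: gM.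
by exists (h x); [apply: hC; exists x | apply: hg; rewrite inE].
Qed.

Lemma HG_inj C h g : HG C h g -> {in M &, injective g}.
Proof.
move=> [[hC gM hg gh] _] y1 y2 m1 m2 e.
by rewrite -(gh _ m1) -(gh _ m2) e.
Qed.

Definition code (C : set baire) : seq bool -> baire := fun l => gfun C (dsum R l).

Lemma code_det C1 C2 : cantor_set R C1 -> cantor_set R C2 -> code C1 = code C2 -> C1 = C2.
Proof.
move=> /gfunP[h1 H1] /gfunP[h2 H2] ec.
rewrite (HG_img H1) (HG_img H2).
have eg : forall y, M y -> gfun C1 y = gfun C2 y.
  move=> y [b yb].
  have c1 := within_seq H1.2.2 (ex_intro _ b yb) (fun n => @ps_M R b n) yb.
  have c2 := within_seq H2.2.2 (ex_intro _ b yb) (fun n => @ps_M R b n) yb.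
  have e' : (gfun C1 \o ps R b) = (gfun C2 \o ps R b).
    by apply/funext => n /=; rewrite (@ps_mkseq R); have := congr1 (fun f => f (mkseq b n)) ec.
  rewrite e' in c1; exact: (cvg_unique baire_hausdorff c1 c2).
apply/seteqP; split => _ [y My <-]; exists y => //; by rewrite eg.
Qed.

Definition Bset := nat -> bool.

Lemma cantor_big C : cantor_set R C ->
  exists e : Bset -> baire, injective e /\ forall b, C (e b).
Proof.
move=> /gfunP[h H]; exists (fun b => gfun C (sumB R b)); split.
  move=> b1 b2 /= e; apply: (@sumB_inj R).
  by apply: (HG_inj H) => //; apply/mem_set; exact: (@sumB_M R).
move=> b; have [[_ gM _ _] _] := H; apply: gM; exists (sumB R b) => //; exact: (@sumB_M R).
Qed.

Definition Ctarget (c : seq bool -> baire) : set baire :=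
  xget setT [set C | cantor_set R C /\ code C = c].

Lemma Ctarget_code C : cantor_set R C -> Ctarget (code C) = C.
Proof.
move=> cC; rewrite /Ctarget.
have [cC' e] := xgetPex setT (P := [set C' | cantor_set R C' /\ code C' = code C])
  (ex_intro _ C (conj cC erefl)).
exact: code_det cC' cC e.
Qed.

Lemma Ctarget_big c : exists e : Bset -> baire, injective e /\ forall b, Ctarget c (e b).
Proof.
case: (pselect (exists C, cantor_set R C /\ code C = c)) => [ex|nex].
  have [cC _] := xgetPex setT ex.
  exact: cantor_big cC.
rewrite /Ctarget xgetPN; last by move=> C HC; apply: nex; exists C.
exists (fun b n => nat_of_bool (b n)); split => // b1 b2 e; apply/funext => n.
by have := congr1 (fun f => f n) e; case: (b1 n); case: (b2 n).
Qed.

End Cant.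

End CantPart.
Import CantPart.

Unset Implicit Arguments. Set Strict Implicit.

Lemma bset_uncountable (phi : (nat -> bool) -> nat) : ~ injective phi.
Proof.
move=> inj.
pose inv n := xget (fun _ : nat => false) [set b | phi b = n].
pose d := fun n => ~~ inv n n.
have id : inv (phi d) = d.
  apply: inj; exact: (@xgetPex _ (fun _ : nat => false) [set b | phi b = phi d] (ex_intro _ d erefl)).
have : d (phi d) = ~~ inv (phi d) (phi d) by [].
by rewrite id; case: (d (phi d)).
Qed.

Definition Ktask : Type := ((seq bool -> baire) * nat * (nat -> bool))%type.
Definition Qc : Type := ((seq bool * nat * nat) + (nat + nat))%type.

Definition jK (t : Ktask) : nat -> bool := fun k =>
  match @unpickle Qc k with
  | Some (inl (l, i, v)) => t.1.1 l i == v
  | Some (inr (inl v)) => t.1.2 == v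
  | Some (inr (inr m)) => t.2 m
  | None => false
  end.

Lemma jK_inj : injective jK.
Proof.
move=> [[c n] s] [[c' n'] s'] e.
have ev : forall q : Qc, jK (c, n, s) (pickle q) = jK (c', n', s') (pickle q).
  by move=> q; rewrite e.
have ec : c = c'.
  apply/funext => l; apply/funext => i.
  have := ev (inl (l, i, c l i)); rewrite /jK !pickleK /= eqxx.
  by move/esym/eqP.
have en : n = n'.
  by have := ev (inr (inl n)); rewrite /jK !pickleK /= eqxx => /esym/eqP.
have es : s = s'.
  by apply/funext => m; have := ev (inr (inr m)); rewrite /jK !pickleK /=.
by rewrite ec en es.
Qed.

Theorem mainTheorem14 (R : realType) (S : set R) :
  (exists a : nat -> R, (forall n, S (a n)) /\ (forall n, a n < a n.+1)) ->
  exists f : baire -> R,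
    (forall x, S (f x)) /\ I_has_winning_strategy f /\
    (forall (r : R) (C : set baire), cantor_set R C ->
       ~ countable (C `&` [set x | r <= f x]) \/ C `&` [set x | r <= f x] = set0).
Proof.
move=> [a [Sa ainc]].
have [sel [selinj selT]] := @selection baire Ktask (fun t => Ctarget R t.1.1)
  (fun t => Ctarget_big R t.1.1) (ex_intro _ jK jK_inj).
pose t0 : Ktask := (fun _ => point, 0%N, fun _ => false).
pose p (x : baire) : nat := (xget t0 [set t | sel t = x]).1.2.
have p_sel : forall t, p (sel t) = t.1.2.
  move=> t; rewrite /p.
  have := xgetPex t0 (ex_intro (fun t' => sel t' = sel t) t erefl).
  by move/selinj ->.
pose f := fun x : baire => a (kch x (p x)).
exists f; split; first by move=> x; exact: Sa.
split.
  exists (strat a) => v; apply/negP => /eqP E.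
  have := game_forb ainc (esym E).
  exact: kch_ok.
move=> r C cC.
case: (pselect (exists x0, r <= f x0)) => [[x0 rx0]|nex]; last first.
  right; apply/seteqP; split => // x [_ /= rx]; apply: nex; by exists x.
left => /countable_injP [phi phiinj].
pose m := (p x0).+1.
pose e := fun s : nat -> bool => sel (code R C, m, s).
have eC : forall s, (C `&` [set x | r <= f x]) (e s).
  move=> s; split.
    by have := selT (code R C, m, s); rewrite /= Ctarget_code.
  rewrite /= (le_trans rx0) // /f /e p_sel /=.
  apply/ltW/a_lt => //.
  apply: (leq_ltn_trans (kch_le _ _)).
  apply: (leq_trans _ (kch_ge _ _)); rewrite /m; lia.
apply: (bset_uncountable (phi \o e)) => s1 s2 /= h.
have := phiinj _ _ (mem_set (eC s1)) (mem_set (eC s2)) h.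
by move/selinj => [].
Qed.
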